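(* For every integer $k\ge1$, $N(2k+3,k)=3$ if $3\mid k$ and $N(2k+3,k)=1$ if $3\nmid k$.
   Context: For $n>k\ge1$, $N(n,k)$ is the nullity of the $n\times n$ skew-symmetric Toeplitz matrix $A(n,k)$ whose first $k$ superdiagonals have all entries $1$ and whose remaining superdiagonals have all entries $0$. *)

(* Defs.v *)
From mathcomp Require Import all_boot all_order all_algebra.
Set Implicit Arguments. Unset Strict Implicit. Unset Printing Implicit Defensive.
Import GRing.Theory Num.Theory.
Local Open Scope ring_scope.

Definition Amat (n k : nat) : 'M[rat]_n :=
  \matrix_(i < n, j < n)
    (if ((i < j)%N && (j <= i + k)%N) then 1
     else if ((j < i)%N && (i <= j + k)%N) then -1 else 0).

Definition Nnull (n k : nat) : nat := (n - \rank (Amat n k))%N.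

(* Main.v *)
Require Import Defs.
From mathcomp Require Import all_boot all_order all_algebra.
From mathcomp Require Import zify ring lra.
Set Implicit Arguments. Unset Strict Implicit. Unset Printing Implicit Defensive.
Import GRing.Theory Num.Theory.
Local Open Scope ring_scope.

Ltac splitifs := repeat (case: ifP => ?; try (exfalso; lia)).

Definition a (k i j : nat) : rat :=
  if ((i < j)%N && (j <= i + k)%N) then 1
  else if ((j < i)%N && (i <= j + k)%N) then -1 else 0.


Lemma a_diff k i j : a k i j.+1 - a k i j =
  (if i == j then 1 else 0) + (if i == j.+1 then 1 else 0)
  - (if (k <= j)%N && (i == j - k)%N then 1 else 0) - (if i == (j+k+1)%N then 1 else 0).
Proof. rewrite /a; splitifs; lra. Qed.

Definition C (m k : nat) (w : nat -> rat) (j : nat) := \sum_(i < m.+1) w i * a k i j.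
Definition R (m k : nat) (w : nat -> rat) (j : nat) :=
  w j + w j.+1 - (if (k <= j)%N then w (j - k)%N else 0)
  - (if (j + k + 1 <= m)%N then w (j + k + 1)%N else 0).

Lemma sum_delta m (w : nat -> rat) (t : nat) :
  \sum_(i < m.+1) w i * (if (i : nat) == t then 1 else 0) = if (t <= m)%N then w t else 0.
Proof.
case: ifP => ht.
  rewrite (bigD1 (Ordinal (n:=m.+1) (m:=t) ht)) //= eqxx mulr1 big1 ?addr0 //.
  move=> i /eqP hi; case: eqP => e; last by rewrite mulr0.
  by exfalso; apply: hi; apply: val_inj.
rewrite big1 // => i _; case: eqP => e; last by rewrite mulr0.
by exfalso; have := ltn_ord i; lia.
Qed.

Lemma C_diff m k w j : (j < m)%N -> C m k w j.+1 - C m k w j = R m k w j.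
Proof.
move=> hjm.
rewrite /C /R -sumrB.
under eq_bigr => i _ do rewrite -mulrBr a_diff !mulrBr mulrDr.
rewrite !sumrB big_split /= !sum_delta.
have -> : \sum_(i < m.+1) w i * (if (k <= j)%N && ((i:nat) == j - k)%N then 1 else 0)
   = if (k <= j)%N then \sum_(i < m.+1) w i * (if (i : nat) == (j - k)%N then 1 else 0) else 0.
  case: ifP => hk; first by apply: eq_bigr => i _.
  by rewrite big1 // => i _; rewrite mulr0.
rewrite sum_delta.
rewrite (ifT _ _ (ltnW hjm)) (ifT _ _ hjm).
by case: ifP => h1; rewrite ?(ifT _ _ (leq_trans (leq_subr _ _) (ltnW hjm))).
Qed.

Lemma C_all m k w : C m k w 0 = 0 -> (forall j, (j < m)%N -> R m k w j = 0) ->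
  forall j, (j <= m)%N -> C m k w j = 0.
Proof.
move=> h0 hR; elim=> [//|j IH] hj.
have := @C_diff m k w j hj; rewrite hR // IH ?(ltnW hj) //; lra.
Qed.

Section Kern.
Variables (k : nat) (v : nat -> rat).
Hypothesis hk : (1 <= k)%N.
Hypothesis hR : forall j, (j < 2 * k + 2)%N -> R (2 * k + 2) k v j = 0.

Ltac useR j := have := @hR j ltac:(lia); rewrite /R; splitifs.

Lemma D1 i i1 t : (i < k)%N -> i1 = i.+1 -> t = (i + k + 1)%N -> v t = v i + v i1.
Proof. move=> hi -> ->; useR i; lra. Qed.

Lemma D2 t j j1 : (2 <= t)%N -> (t <= k + 1)%N -> j = (t + k)%N -> j1 = j.+1 ->
  v j + v j1 = v t.
Proof.
move=> h1 h2 -> ->; useR (t + k)%N.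
have -> : (t + k - k)%N = t by lia. lra.
Qed.

Lemma M1 t1 t2 : t1 = k.+1 -> t2 = (2 * k + 1)%N -> v k + v t1 - v 0 - v t2 = 0.
Proof.
move=> -> ->; useR k; rewrite subnn.
have -> : (k + k + 1)%N = (2 * k + 1)%N by lia. lra.
Qed.

Lemma M2 t1 t2 t3 : t1 = k.+1 -> t2 = k.+2 -> t3 = (2 * k + 2)%N ->
  v t1 + v t2 - v 1 - v t3 = 0.
Proof.
move=> -> -> ->; useR k.+1.
have -> : (k.+1 - k)%N = 1%N by lia.
have -> : (k.+1 + k + 1)%N = (2 * k + 2)%N by lia. lra.
Qed.

Lemma three x y z : (1 <= x)%N -> y = x.+1 -> z = y.+1 -> (z <= k)%N ->
  v x + v y + v z = 0.
Proof.
move=> h1 ey ez hz.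
have a1 := D2 (t := y) (j := (y + k)%N) (j1 := (y + k).+1) ltac:(lia) ltac:(lia) erefl erefl.
have a2 := D1 (i := x) (i1 := y) (t := (y + k)%N) ltac:(lia) ey ltac:(lia).
have a3 := D1 (i := y) (i1 := z) (t := (y + k).+1) ltac:(lia) ez ltac:(lia).
lra.
Qed.

Lemma U3 : v 0 = 0 -> v 1 = 0 -> v 2 = 0 -> forall t, (t <= 2 * k + 2)%N -> v t = 0.
Proof.
move=> h0 h1 h2.
have sa : forall t, (t <= k)%N -> v t = 0.
  elim/ltn_ind=> t IH ht.
  case: (ltnP t 3) => t3.
    by case: t {IH ht} t3 => [|[|[|]]].
  have := three (x := (t - 2)%N) (y := (t - 1)%N) (z := t) ltac:(lia) ltac:(lia) ltac:(lia) ht.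
  move=> H; rewrite (IH (t-2)%N) ?(IH (t-1)%N) in H; try lia; lra.
have sb : forall t, (t <= 2 * k)%N -> v t = 0.
  move=> t ht; case: (leqP t k) => htk; first exact: sa.
  rewrite (D1 (i := (t - k - 1)%N) (i1 := (t - k)%N) (t := t)) ?sa; try lia; lra.
have sc : v (2 * k + 1)%N = 0.
  have := M1 erefl erefl; rewrite h0 (sb k) ?(sb k.+1); try lia; lra.
move=> t ht; case: (leqP t (2 * k)) => h; first exact: sb.
case: (eqVneq t (2 * k + 1)%N) => [->//|hne].
have -> : t = (2 * k + 2)%N by lia.
have e2 : v k.+2 = 0.
  case: (leqP k.+2 (2 * k)) => hh; first exact: sb.
  by have -> : k.+2 = (2 * k + 1)%N by lia.
have := M2 erefl erefl erefl; rewrite h1 (sb k.+1) ?e2; try lia; lra.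
Qed.

Lemma per q r t : (1 <= r)%N -> (3 * q + r <= k)%N -> t = (3 * q + r)%N -> v t = v r.
Proof.
move=> hr; move=> + ->; elim: q => [|q IH] h; first by rewrite muln0 add0n.
rewrite -IH; last lia.
have a1 := three (x := (3 * q + r)%N) (y := (3 * q + r).+1) (z := (3 * q + r).+2) ltac:(lia) erefl erefl ltac:(lia).
have a2 := three (x := (3 * q + r).+1) (y := (3 * q + r).+2) (z := (3 * q.+1 + r)%N) ltac:(lia) erefl ltac:(lia) ltac:(lia).
lra.
Qed.

Lemma W1 : (2 <= k)%N -> v (k - 1)%N + v k + v 1 = 0.
Proof.
move=> k2.
have a1 := D2 (t := k) (j := (2 * k)%N) (j1 := (2 * k + 1)%N) k2 ltac:(lia) ltac:(lia) ltac:(lia).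
have a2 := D1 (i := (k - 1)%N) (i1 := k) (t := (2 * k)%N) ltac:(lia) ltac:(lia) ltac:(lia).
have a3 := M1 (t1 := (k + 1)%N) (t2 := (2 * k + 1)%N) ltac:(lia) erefl.
have a4 := D1 (i := 0) (i1 := 1) (t := (k + 1)%N) ltac:(lia) erefl ltac:(lia).
lra.
Qed.

Lemma W2 : (2 <= k)%N -> v k + v 1 + v 2 = 0.
Proof.
move=> k2.
have a1 := D2 (t := (k + 1)%N) (j := (2 * k + 1)%N) (j1 := (2 * k + 2)%N) ltac:(lia) ltac:(lia) ltac:(lia) ltac:(lia).
have a3 := M1 (t1 := (k + 1)%N) (t2 := (2 * k + 1)%N) ltac:(lia) erefl.
have a5 := M2 (t1 := (k + 1)%N) (t2 := (k + 2)%N) (t3 := (2 * k + 2)%N) ltac:(lia) ltac:(lia) erefl.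
have a4 := D1 (i := 0) (i1 := 1) (t := (k + 1)%N) ltac:(lia) erefl ltac:(lia).
have a6 := D1 (i := 1) (i1 := 2) (t := (k + 2)%N) ltac:(lia) erefl ltac:(lia).
lra.
Qed.

Lemma nondiv : ~~ (3 %| k)%N -> v 0 = 0 -> v 1 = 0 /\ v 2 = 0.
Proof.
move=> nd h0.
case: (eqVneq k 1) => [k1|k1].
  have a4 := D1 (i := 0) (i1 := 1) (t := 2) ltac:(lia) erefl ltac:(lia).
  have a3 := M1 (t1 := 2) (t2 := 3) ltac:(lia) ltac:(lia).
  have a5 := M2 (t1 := 2) (t2 := 3) (t3 := 4) ltac:(lia) ltac:(lia) ltac:(lia).
  have a1 := D2 (t := 2) (j := 3) (j1 := 4) ltac:(lia) ltac:(lia) ltac:(lia) ltac:(lia).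
  rewrite k1 in a3 a1.
  split; lra.
have k2 : (2 <= k)%N by lia.
have w1 := W1 k2; have w2 := W2 k2.
have [q [r [ek hr]]] : exists q r, k = (3 * q + r)%N /\ (r == 1%N) || (r == 2%N).
  exists (k %/ 3)%N, (k %% 3)%N; split; first by rewrite {1}(divn_eq k 3) mulnC.
  move: nd; rewrite /dvdn; have := ltn_pmod k (isT : (0 < 3)%N). lia.
case/orP: hr => /eqP er; subst r.
  have p1 := per (q := q) (r := 1) (t := k) erefl ltac:(lia) ek.
  have p3 := per (q := q.-1) (r := 3) (t := (k - 1)%N) isT ltac:(lia) ltac:(lia).
  have t3 := three (x := 1) (y := 2) (z := 3) isT erefl erefl ltac:(lia).
  split; lra.
have p1 := per (q := q) (r := 2) (t := k) isT ltac:(lia) ek.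
have p3 := per (q := q) (r := 1) (t := (k - 1)%N) isT ltac:(lia) ltac:(lia).
split; lra.
Qed.

End Kern.


Definition Ev (k t : nat) : rat :=
  if (t == 0)%N || (t == k + 1)%N || (t == 2 * k + 2)%N then 1 else 0.

Lemma Ev_R k j : (1 <= k)%N -> (j < 2 * k + 2)%N -> R (2 * k + 2) k (Ev k) j = 0.
Proof. move=> hk hj; rewrite /R /Ev; splitifs; lra. Qed.

Lemma Ev_C0 k : C (2 * k + 2) k (Ev k) 0 = 0.
Proof. rewrite /C big1 // => i _; rewrite /Ev /a; splitifs; lra. Qed.

Definition pp (x y : rat) (t : nat) : rat :=
  if (t %% 3 == 0)%N then - x - y else if (t %% 3 == 1)%N then x else y.

Definition Pw (k : nat) (x y : rat) (t : nat) : rat :=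
  if (t == 0)%N then 0 else if (t <= k)%N then pp x y t
  else if (t == k + 1)%N then pp x y 1 else - pp x y (t - k + 1).

Lemma Pw_R k x y j : (3 %| k)%N -> (1 <= k)%N -> (j < 2 * k + 2)%N ->
  R (2 * k + 2) k (Pw k x y) j = 0.
Proof. move=> hd hk hj; rewrite /R /Pw /pp; splitifs; lra. Qed.

Definition tp (x y : rat) (t : nat) : rat :=
  if (t %% 3 == 0)%N then 0 else if (t %% 3 == 1)%N then x else x + y.

Lemma Pw_sum k x y N : \sum_(i < N) Pw k x y i * a k i 0 = - tp x y (minn N.-1 k).
Proof.
elim: N => [|N IH]; first by rewrite big_ord0 /tp; splitifs; lra.
rewrite big_ord_recr /= IH /Pw /tp /pp /a; splitifs; lra.
Qed.

Lemma Pw_C0 k x y : (3 %| k)%N -> C (2 * k + 2) k (Pw k x y) 0 = 0.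
Proof.
move=> hd; rewrite /C Pw_sum /tp; splitifs; lra.
Qed.


Lemma rank_ker_eq m k r (B : 'M[rat]_(r, m.+1)) :
  B *m Amat m.+1 k = 0 ->
  (forall u : 'rV_(m.+1), u *m Amat m.+1 k = 0 -> (u <= B)%MS) ->
  \rank (kermx (Amat m.+1 k)) = \rank B.
Proof.
move=> hB hu; apply/eqP; rewrite eqn_leq; apply/andP; split; apply: mxrankS.
  by apply/row_subP => i; apply: hu; rewrite -row_mul mulmx_ker row0.
by rewrite sub_kermx hB.
Qed.

Lemma mulAmat m k r (G : nat -> nat -> rat) s j :
  ((\matrix_(s < r, i < m.+1) G s i) *m Amat m.+1 k) s j = C m k (G s) j.
Proof. rewrite mxE /C; apply: eq_bigr => i _; rewrite !mxE //. Qed.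

Definition vu m (u : 'rV[rat]_(m.+1)) (t : nat) : rat :=
  if (t <= m)%N then u 0 (inord t) else 0.

Lemma ker_R m k (u : 'rV[rat]_(m.+1)) : u *m Amat m.+1 k = 0 ->
  forall j, (j < m)%N -> R m k (vu u) j = 0.
Proof.
move=> hu.
have hC : forall j, (j <= m)%N -> C m k (vu u) j = 0.
  move=> j hj.
  have := congr1 (fun M : 'rV_(m.+1) => M 0 (inord j)) hu; rewrite /= !mxE => <-.
  rewrite /C; apply: eq_bigr => i _; rewrite !mxE inordK // /vu.
  by rewrite -ltnS ltn_ord inord_val.
move=> j hj; rewrite -C_diff // !hC ?subrr //; lia.
Qed.

Lemma rank_sel m r (G : nat -> nat -> rat) : (r <= m.+1)%N ->
  (forall s t, (s < r)%N -> (t < r)%N -> G s t = (if s == t then 1 else 0)) ->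
  \rank (\matrix_(s < r, i < m.+1) G s i) = r.
Proof.
move=> hr hG; apply/eqP; rewrite eqn_leq rank_leq_row /=.
set S := \matrix_(i < m.+1, s < r) (if (i:nat) == s then (1:rat) else 0).
have e : (\matrix_(s < r, i < m.+1) G s i) *m S = 1%:M.
  apply/matrixP => s s'; rewrite !mxE.
  under eq_bigr => i _ do rewrite !mxE.
  rewrite sum_delta ifT; last by have := ltn_ord s'; lia.
  rewrite hG //; case: (s =P s') => [->|ne]; first by rewrite !eqxx.
  rewrite ifF ?(introF eqP ne) //; apply/negbTE; apply/eqP => e; apply: ne; exact: val_inj.
by rewrite -{1}(mxrank1 rat r) -e mxrankM_maxl.
Qed.

Lemma Rlin m k f g1 g2 g3 c1 c2 c3 j :
  R m k (fun t => f t - (c1 * g1 t + c2 * g2 t + c3 * g3 t)) j =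
  R m k f j - (c1 * R m k g1 j + c2 * R m k g2 j + c3 * R m k g3 j).
Proof. rewrite /R; case: ifP => _; case: ifP => _; ring. Qed.


Definition G3 (k s : nat) : nat -> rat :=
  if s == 0%N then Ev k else if s == 1%N then Pw k 1 0 else Pw k 0 1.

Lemma vu_eq m (u : 'rV[rat]_(m.+1)) (j : 'I_m.+1) : u 0 j = vu u j.
Proof. by rewrite /vu -ltnS ltn_ord inord_val. Qed.

Lemma case_nd k : (1 <= k)%N -> ~~ (3 %| k)%N ->
  \rank (kermx (Amat (2 * k + 2).+1 k)) = 1%N.
Proof.
move=> hk nd.
set B := \matrix_(s < 1, i < (2 * k + 2).+1) (fun _ t => Ev k t) s i.
rewrite (@rank_ker_eq _ _ _ B).
  rewrite /B (@rank_sel _ 1 (fun _ t => Ev k t)) // => -[|s] [|t] //.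
  apply/matrixP => s j; rewrite /B (@mulAmat _ k 1 (fun _ t => Ev k t)) mxE.
  apply: C_all; [exact: Ev_C0 | move=> jj hj; exact: Ev_R | by have := ltn_ord j; lia].
move=> u hu.
pose w := fun t => vu u t - (vu u 0 * Ev k t + 0 * Ev k t + 0 * Ev k t).
have hR : forall j, (j < 2 * k + 2)%N -> R (2 * k + 2) k w j = 0.
  move=> j hj; rewrite /w Rlin (ker_R hu) // Ev_R //; ring.
have w0 : w 0 = 0 by rewrite /w /Ev /=; ring.
have [w1 w2] := nondiv hk hR nd w0.
have wz := U3 hk hR w0 w1 w2.
have -> : u = (\row_(s < 1) vu u 0) *m B.
  apply/matrixP => i j; rewrite ord1 mxE big_ord1 !mxE vu_eq.
  have := wz j ltac:(have := ltn_ord j; lia); rewrite /w; lra.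
exact: submxMl.
Qed.

Lemma case_d k : (1 <= k)%N -> (3 %| k)%N ->
  \rank (kermx (Amat (2 * k + 2).+1 k)) = 3%N.
Proof.
move=> hk dk.
have k3 : (3 <= k)%N by move: dk hk; rewrite /dvdn; lia.
set B := \matrix_(s < 3, i < (2 * k + 2).+1) G3 k s i.
rewrite (@rank_ker_eq _ _ _ B).
  rewrite /B (@rank_sel _ 3 (G3 k)) //; first lia.
  move=> s t hs ht; rewrite /G3 /Ev /Pw /pp; splitifs; lra.
  apply/matrixP => s j; rewrite /B (@mulAmat _ k 3 (G3 k)) mxE.
  have hj : (j <= 2 * k + 2)%N by have := ltn_ord j; lia.
  have hG : G3 k s = Ev k \/ G3 k s = Pw k 1 0 \/ G3 k s = Pw k 0 1.
    by rewrite /G3; case: ifP => _; [left|right; case: ifP => _; [left|right]].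
  case: hG => [->|[->|->]]; apply: C_all => //;
    by [exact: Ev_C0 | exact: Pw_C0 | move=> jj hjj; exact: Ev_R | move=> jj hjj; exact: Pw_R].
move=> u hu.
pose w := fun t => vu u t - (vu u 0 * Ev k t + vu u 1 * Pw k 1 0 t + vu u 2 * Pw k 0 1 t).
have hR : forall j, (j < 2 * k + 2)%N -> R (2 * k + 2) k w j = 0.
  move=> j hj; rewrite /w (@Rlin _ k (vu u) (Ev k) (Pw k 1 0) (Pw k 0 1)) (ker_R hu) // Ev_R // !Pw_R //; ring.
have w0 : w 0 = 0 by rewrite /w /Ev /Pw /=; splitifs; rewrite /=; ring.
have w1 : w 1 = 0 by rewrite /w /Ev /Pw /pp /=; do 3 (splitifs; rewrite /=); ring.
have w2 : w 2 = 0 by rewrite /w /Ev /Pw /pp /=; do 3 (splitifs; rewrite /=); ring.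
have wz := U3 hk hR w0 w1 w2.
have -> : u = (\row_(s < 3) vu u s) *m B.
  apply/matrixP => i j; rewrite ord1 mxE !big_ord_recr big_ord0 /= !mxE vu_eq.
  have := wz j ltac:(have := ltn_ord j; lia); rewrite /w /G3 /=; lra.
exact: submxMl.
Qed.

Theorem theorem8p3 (k : nat) : (1 <= k)%N ->
  Nnull (2 * k + 3) k = (if (3 %| k)%N then 3 else 1)%N.
Proof.
move=> hk.
have -> : (2 * k + 3 = (2 * k + 2).+1)%N by lia.
rewrite /Nnull -mxrank_ker.
case: ifP => hd; first exact: case_d.
by apply: case_nd => //; rewrite hd.
Qed.
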